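(* Let $m$ be a positive integer and $\mathcal{N}_r$ the gadget of size $m$. Every $\mathcal{H}^{(\ast)}$-partition of $\mathcal{N}_r$ has size at least $m+1$. Moreover, there exist exactly two $\mathcal{H}^{(m+1)}$-partitions of $\mathcal{N}_r$, namely $\mathcal{L}_r=\{\{r_{i,0},r_{i,1},\dots,r_{i,m}\}:0\le i\le m\}$ and $\mathcal{R}_r=\{\{r_{0,i},r_{1,i},\dots,r_{m,i}\}:0\le i\le m\}$.
   Context: The gadget $\mathcal{N}_r=\langle\mathcal{V}_r,\mathcal{E}_r\rangle$ of size $m$ has vertex set $\mathcal{V}_r=\{r_{i,j}:0\le i,j\le m\}$ and arc set $\mathcal{E}_r=\{\langle r_{i,j},r_{i,j+1}\rangle:0\le i\le m,\ 0\le j<m\}\cup\{\langle r_{i,j},r_{i+1,j}\rangle:0\le i<m,\ 0\le j\le m\}$; it is a DAG. For a DAG $G$, a partition $\pi$ of its vertex set is an $\mathcal{H}^{(k)}$-partition if $|\pi|=k$, every induced subgraph $G[P]$, $P\in\pi$, has a directed Hamiltonian path, and the quotient digraph $G/\pi$ (vertex set $\pi$, arc $\langle P,Q\rangle$ for $P\ne Q$ whenever some arc of $G$ goes from $P$ to $Q$) is acyclic; an $\mathcal{H}^{(\ast)}$-partition is an $\mathcal{H}^{(k)}$-partition for some $k$. *)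

(* Defs.v *)
From mathcomp Require Import all_boot.
Set Implicit Arguments. Unset Strict Implicit. Unset Printing Implicit Defensive.

Section Generic.
Variable V : finType.
Variable arc : rel V.

Definition has_ham_path (A : {set V}) : Prop :=
  exists s : seq V, [/\ uniq s, (forall x, (x \in s) = (x \in A)) & sorted arc s].

Definition quot_arc (pi : {set {set V}}) : rel {set V} :=
  fun P Q => [&& P \in pi, Q \in pi, P != Q &
                 [exists x in P, exists y in Q, arc x y]].

Definition acyclic_rel (T : finType) (e : rel T) : Prop :=
  forall a b, e a b -> ~~ connect e b a.

Definition Hk_partition (k : nat) (pi : {set {set V}}) : Prop :=
  [/\ partition pi [set: V], #|pi| = k,
      (forall P, P \in pi -> has_ham_path P) &
      acyclic_rel (quot_arc pi)].

Definition Hstar_partition (pi : {set {set V}}) : Prop :=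
  exists k, Hk_partition k pi.
End Generic.

(* The gadget N_r of size m: vertex r_{i,j} is the pair (i,j), 0 <= i,j <= m. *)
Definition gvert (m : nat) := ('I_m.+1 * 'I_m.+1)%type.

Definition garc (m : nat) : rel (gvert m) :=
  fun u v => ((u.1 == v.1) && (v.2 == u.2.+1 :> nat))
          || ((u.2 == v.2) && (v.1 == u.1.+1 :> nat)).

Definition Lpart (m : nat) : {set {set gvert m}} :=
  [set [set ((i, j) : gvert m) | j : 'I_m.+1] | i : 'I_m.+1].
Definition Rpart (m : nat) : {set {set gvert m}} :=
  [set [set ((j, i) : gvert m) | j : 'I_m.+1] | i : 'I_m.+1].

(* Main.v *)
Require Import Defs.
From mathcomp Require Import all_boot.
From mathcomp Require Import zify.
Set Implicit Arguments. Unset Strict Implicit. Unset Printing Implicit Defensive.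

Section G.
Variable m : nat.
Notation V := (gvert m).
Notation e := (@garc m).

Definition vsum (z : V) : nat := z.1 + z.2.

Lemma garcP (x y : V) : reflect ((x.1 = y.1 :> nat /\ y.2 = x.2.+1 :> nat)
   \/ (x.2 = y.2 :> nat /\ y.1 = x.1.+1 :> nat)) (e x y).
Proof.
rewrite /garc; apply: (iffP orP) => [[/andP[/eqP h1 /eqP h2]|/andP[/eqP h1 /eqP h2]]|[[h1 h2]|[h1 h2]]].
- by left; rewrite h1.
- by right; rewrite h1.
- by left; apply/andP; split; apply/eqP => //; apply: val_inj.
- by right; apply/andP; split; apply/eqP => //; apply: val_inj.
Qed.

Lemma vertE (x y : V) : x.1 = y.1 :> nat -> x.2 = y.2 :> nat -> x = y.
Proof. by case: x y => [x1 x2] [y1 y2] /= h1 h2; congr pair; apply: val_inj. Qed.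

Lemma garc_sum x y : e x y -> vsum y = (vsum x).+1.
Proof. by case/garcP; rewrite /vsum; lia. Qed.

Lemma path_sum_lt x s : path e x s -> forall y, y \in s -> vsum x < vsum y.
Proof.
elim: s x => [//|z s IH] x /= /andP[exz pzs] y; rewrite inE => /orP[/eqP ->|ys].
  by rewrite (garc_sum exz).
by have := IH _ pzs _ ys; rewrite (garc_sum exz); lia.
Qed.

Lemma sorted_sum_inj (s : seq V) : sorted e s -> {in s &, injective vsum}.
Proof.
elim: s => [//|x s IH] /= ps a b; rewrite !inE.
have ss := path_sorted ps.
move=> /orP[/eqP ->|ais] /orP[/eqP ->|bis] //.
- by move=> h; have := path_sum_lt ps bis; rewrite h ltnn.
- by move=> h; have := path_sum_lt ps ais; rewrite h ltnn.
- exact: IH.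
Qed.

Lemma acyclic_meas (T : finType) (r : rel T) (g : T -> nat) :
  (forall a b, r a b -> g a < g b) -> acyclic_rel r.
Proof.
move=> hg a b rab; apply/negP => /connectP [p pp ha]; subst a.
have : g b <= g (last b p).
  elim: p b pp {rab} => [//|z p IH] b /= /andP[rbz pz].
  by have := hg _ _ rbz; have := IH _ pz; lia.
by have := hg _ _ rab; lia.
Qed.


Definition lineS (b : bool) (i : 'I_m.+1) : {set V} :=
  [set z : V | (if b then z.1 else z.2) == i].
Definition mk (b : bool) (i j : 'I_m.+1) : V := if b then (i, j) else (j, i).

Lemma lineE b i : lineS b i = [set mk b i j | j : 'I_m.+1].
Proof.
apply/setP => z; rewrite inE; apply/eqP/imsetP => [<-|[j _ ->]].
  by exists (if b then z.2 else z.1) => //; case: b; case: z.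
by case: b.
Qed.

Lemma card_lineS b i : #|lineS b i| = m.+1.
Proof.
rewrite lineE card_imset ?card_ord //.
by move=> j j'; case: b => -[].
Qed.

Section Part.
Variable pi : {set {set V}}.
Hypothesis Hpart : partition pi [set: V].
Hypothesis Hac : acyclic_rel (quot_arc e pi).
Hypothesis Hham : forall P, P \in pi -> has_ham_path e P.

Lemma cover_pi x : x \in cover pi.
Proof. by move: Hpart => /and3P[/eqP -> _ _]; rewrite inE. Qed.

Lemma inj_part P : P \in pi -> {in P &, injective vsum}.
Proof.
move=> /Hham [s [_ ms ss]] a b; rewrite -!ms; exact: sorted_sum_inj.
Qed.

Lemma noturn P a b c : P \in pi -> a \in P -> b \in P -> c \in P ->
  e a b -> e b c -> (a.1 == b.1) = (b.1 == c.1).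
Proof.
move=> HP aP bP cP eab ebc.
have key : forall d, d \notin P -> e a d -> e d c -> False.
  move=> d dP ead edc.
  set Q := pblock pi d.
  have HQ : Q \in pi by apply: pblock_mem; apply: cover_pi.
  have dQ : d \in Q by rewrite mem_pblock cover_pi.
  have PQ : P != Q by apply/eqP => h; move: dP; rewrite h dQ.
  have q1 : quot_arc e pi P Q.
    rewrite /quot_arc HP HQ PQ /=; apply/existsP; exists a; rewrite aP /=.
    by apply/existsP; exists d; rewrite dQ.
  have q2 : quot_arc e pi Q P.
    rewrite /quot_arc HP HQ eq_sym PQ /=; apply/existsP; exists d; rewrite dQ /=.
    by apply/existsP; exists c; rewrite cP.
  by have := Hac q1; rewrite connect1.
have E : forall u v : 'I_m.+1, (u == v) = (nat_of_ord u == nat_of_ord v) by [].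
case/garcP: eab => [[h1 h2]|[h1 h2]]; case/garcP: ebc => [[h3 h4]|[h3 h4]].
- by rewrite (val_inj h1) (val_inj h3) !eqxx.
- exfalso; apply: (key (c.1, a.2)).
  + apply/negP => dP; have := inj_part HP dP bP.
    move=> h; have := h (ltac:(rewrite /vsum /=; lia)) => /(congr1 (fun z => nat_of_ord z.2)) /=; lia.
  + by apply/garcP; right => /=; lia.
  + by apply/garcP; left => /=; lia.
- exfalso; apply: (key (a.1, c.2)).
  + apply/negP => dP; have := inj_part HP dP bP.
    move=> h; have := h (ltac:(rewrite /vsum /=; lia)) => /(congr1 (fun z => nat_of_ord z.1)) /=; lia.
  + by apply/garcP; left => /=; lia.
  + by apply/garcP; right => /=; lia.
- have F : forall x : nat, (x == x.+1) = false by elim.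
  by rewrite !E h4 F h2 F.
Qed.


Lemma line_path P x s : P \in pi -> path e x s -> x \in P -> {subset s <= P} ->
  (x.1 == (head x s).1 -> all (fun z => z.1 == x.1) s) /\
  (x.1 != (head x s).1 -> all (fun z => z.2 == x.2) s).
Proof.
move=> HP; elim: s x => [|y s IH] x /=; first by [].
move=> /andP[exy pys] xP sub.
have yP : y \in P by apply: sub; rewrite inE eqxx.
have sP : {subset s <= P} by move=> z zs; apply: sub; rewrite inE zs orbT.
have [IH1 IH2] := IH y pys yP sP.
have vert : x.1 != y.1 -> y.2 == x.2.
  move=> h; case/garcP: exy => [[h1 _]|[h1 _]].
    by move: h; rewrite (val_inj h1) eqxx.
  by apply/eqP; apply: val_inj; exact: (esym h1).
case: s pys IH IH1 IH2 sP sub => [|z s] /= pys _ IH1 IH2 sP _.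
  by split => h; rewrite andbT; [rewrite eq_sym | apply: vert].
have zP : z \in P by apply: sP; rewrite inE eqxx.
have eyz : e y z by case/andP: pys.
have nt := noturn HP xP yP zP exy eyz.
split => h.
  have h' : y.1 == z.1 by rewrite -nt.
  by rewrite (eqP h) eqxx; apply: IH1.
have h' : y.1 != z.1 by rewrite -nt.
by rewrite (vert h) /= -(eqP (vert h)); apply: IH2.
Qed.

Lemma part_line P : P \in pi -> exists b i, P \subset lineS b i.
Proof.
move=> HP; have [s [us ms ss]] := Hham HP.
case: s us ms ss => [|x s] us ms ss.
  have h0 : P = set0 by apply/setP => z; rewrite -ms inE.
  by move: Hpart => /and3P[_ _]; rewrite -h0 HP.
have xP : x \in P by rewrite -ms mem_head.
have sub : {subset s <= P} by move=> z zs; rewrite -ms inE zs orbT.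
have [h1 h2] := line_path HP ss xP sub.
case: (boolP (x.1 == (head x s).1)) => h.
  exists true, x.1; apply/subsetP => z; rewrite -ms inE => /orP[/eqP ->|zs];
    rewrite inE /= ?eqxx //; exact: (allP (h1 h)) z zs.
exists false, x.2; apply/subsetP => z; rewrite -ms inE => /orP[/eqP ->|zs];
  rewrite inE /= ?eqxx //; exact: (allP (h2 h)) z zs.
Qed.

Lemma card_part P : P \in pi -> #|P| <= m.+1.
Proof.
move=> /part_line [b [i sub]]; apply: leq_trans (subset_leq_card sub) _; by rewrite card_lineS.
Qed.

Lemma sum_card : \sum_(A in pi) #|A| = m.+1 * m.+1.
Proof. by rewrite -(card_partition Hpart) cardsT card_prod card_ord. Qed.

Lemma card_pi_ge : m.+1 <= #|pi|.
Proof.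
rewrite -(leq_pmul2r (ltn0Sn m)) -sum_card -sum_nat_const.
by apply: leq_sum => A; apply: card_part.
Qed.

Lemma part_eq_line P : #|pi| = m.+1 -> P \in pi -> exists b i, P = lineS b i.
Proof.
move=> hc HP; have [b [i sub]] := part_line HP.
have cP : m.+1 <= #|P|.
  have := sum_card; rewrite (bigD1 P) //=.
  have : \sum_(A in pi | A != P) #|A| <= \sum_(A in pi | A != P) m.+1.
    by apply: leq_sum => A /andP[HA _]; apply: card_part.
  have : \sum_(A in pi) m.+1 = m.+1 + \sum_(A in pi | A != P) m.+1 by rewrite (bigD1 P).
  rewrite sum_nat_const hc => E1 L; rewrite E1 => E2.
  by rewrite -(leq_add2r (\sum_(A in pi | A != P) #|A|)) E2 leq_add2l.
exists b, i; apply/eqP; rewrite eqEcard sub card_lineS //.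
Qed.

End Part.

Lemma mk_in b i j : mk b i j \in lineS b i.
Proof. by rewrite inE; case: b. Qed.

Lemma line_inj b : injective (lineS b).
Proof.
move=> i i' h; have := mk_in b i ord0; rewrite h inE; case: b {h} => /= /eqP //.
Qed.

Lemma line_neq (hm : 0 < m) i j : lineS true i != lineS false j.
Proof.
have [j' nj] : exists j' : 'I_m.+1, j' != j.
  case: (eqVneq j ord0) => [->|h]; last by exists ord0; rewrite eq_sym.
  exists (inord 1); apply/eqP => /(congr1 (@nat_of_ord _)); rewrite /= inordK //; lia.
apply/eqP => h; have := mk_in true i j'; rewrite h inE /=; exact/negP.
Qed.

Lemma rowcol (hm : 0 < m) pi i j : partition pi [set: V] ->
  lineS true i \in pi -> lineS false j \in pi -> False.
Proof.
move=> /and3P[_ /trivIsetP Ht _] Hi Hj.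
have := Ht _ _ Hi Hj (line_neq hm i j).
move/disjoint_setI0/setP/(_ (i, j)); rewrite !inE /= !eqxx //.
Qed.

Lemma sorted_iota_rel (r : rel nat) k n :
  (forall j, k <= j -> j.+1 < k + n -> r j j.+1) -> sorted r (iota k n).
Proof.
elim: n k => [//|n IH] k h /=.
case: n IH h => [//|n] IH h /=.
rewrite h ?leqnn //; last by lia.
exact: (IH k.+1 (fun j h1 h2 => h j (ltnW h1) ltac:(lia))).
Qed.

Definition gmeas (b : bool) (P : {set V}) : nat :=
  if [pick z in P] is Some z then nat_of_ord (if b then z.1 else z.2) else 0.

Lemma gmeas_line b i : gmeas b (lineS b i) = i.
Proof.
rewrite /gmeas; case: pickP => [z|h].
  by rewrite inE => /eqP ->.
by have := h (mk b i ord0); rewrite mk_in.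
Qed.

Lemma lines_Hk b : Hk_partition e m.+1 [set lineS b i | i : 'I_m.+1].
Proof.
split.
- apply/and3P; split.
  + apply/eqP/setP => z; rewrite inE; apply/bigcupP.
    exists (lineS b (if b then z.1 else z.2)); first by apply/imsetP; exists (if b then z.1 else z.2).
    by rewrite inE.
  + apply/trivIsetP => A B /imsetP[i _ ->] /imsetP[i' _ ->] ne.
    rewrite -setI_eq0; apply/eqP/setP => z; rewrite !inE.
    apply/negP => /andP[/eqP h1 /eqP h2]; move: ne; by rewrite -h1 -h2 eqxx.
  + apply/negP => /imsetP[i _ h]; have := mk_in b i ord0; by rewrite -h inE.
- by rewrite card_imset ?card_ord //; apply: line_inj.
- move=> P /imsetP[i _ ->].
  exists (map (fun k => mk b i (inord k)) (iota 0 m.+1)); split.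
  + rewrite map_inj_in_uniq ?iota_uniq // => k k'; rewrite !mem_iota => /andP[_ hk] /andP[_ hk'] h.
    have : inord k = inord k' :> 'I_m.+1 by case: b h => -[].
    by move/(congr1 (@nat_of_ord _)); rewrite !inordK.
  + move=> z; apply/mapP/idP => [[k _ ->]|zin]; first exact: mk_in.
    exists (nat_of_ord (if b then z.2 else z.1)); first by rewrite mem_iota /= ltn_ord.
    by move: zin; rewrite inE; case: b; case: z => z1 z2 /= /eqP ->; rewrite inord_val.
  + rewrite sorted_map; apply: sorted_iota_rel => j _ hj /=.
    by apply/garcP; case: b => /=; [left|right]; rewrite /= !inordK; lia.
- apply: (acyclic_meas (g := gmeas b)) => P Q.
  move/and4P => [/imsetP[i _ ->] /imsetP[i' _ ->] ne].
  move/existsP => [x /andP[xi /existsP[y /andP[yi exy]]]].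
  rewrite !gmeas_line.
  have nei : (i : nat) != i' by apply: contraNneq ne => h; rewrite (val_inj h).
  move: xi yi exy nei; rewrite !inE; case: x => x1 x2; case: y => y1 y2.
  case: b {ne} => /= /eqP <- /eqP <- /garcP /= [[h1 h2]|[h1 h2]] /eqP nei; lia.
Qed.

Lemma Lpart_eq : Lpart m = [set lineS true i | i : 'I_m.+1].
Proof. by rewrite /Lpart; apply: eq_imset => i; rewrite lineE. Qed.

Lemma Rpart_eq : Rpart m = [set lineS false i | i : 'I_m.+1].
Proof. by rewrite /Rpart; apply: eq_imset => i; rewrite lineE. Qed.

End G.

Theorem lemma5p4 (m : nat) (hm : 0 < m) :
  (forall pi : {set {set gvert m}},
      Hstar_partition (@garc m) pi -> m.+1 <= #|pi|) /\
  (forall pi : {set {set gvert m}},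
      Hk_partition (@garc m) m.+1 pi <-> (pi = Lpart m \/ pi = Rpart m)) /\
  Lpart m <> Rpart m.
Proof.
split.
  by move=> pi [k [Hp _ Hh Ha]]; apply: card_pi_ge Hp Ha Hh.
split; last first.
  rewrite Lpart_eq Rpart_eq => h.
  have : lineS true ord0 \in [set lineS false i | i : 'I_m.+1].
    by rewrite -h; apply/imsetP; exists ord0.
  case/imsetP => j _ E; exact: (negP (line_neq hm ord0 j)) (introT eqP E).
move=> pi; split; last first.
  by case=> ->; [rewrite Lpart_eq | rewrite Rpart_eq]; apply: lines_Hk.
case=> Hp Hc Hh Ha.

have HB0 : pblock pi (ord0, ord0) \in pi by apply: pblock_mem; apply: cover_pi Hp _.
have [b0 [i0 E0]] := part_eq_line Hp Ha Hh Hc HB0.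
have all_b0 : forall P, P \in pi -> exists i, P = lineS b0 i.
  move=> P HP; have [b [i E]] := part_eq_line Hp Ha Hh Hc HP.
  case: (eqVneq b b0) => [<-|nb]; first by exists i.
  exfalso; move: HP HB0; rewrite E E0.
  by case: b b0 nb {E E0} => -[] // _ H1 H2; first [exact: (rowcol hm Hp H1 H2) | exact: (rowcol hm Hp H2 H1)].
have pieq : pi = [set lineS b0 i | i : 'I_m.+1].
  apply/setP => P; apply/idP/imsetP => [HP|[i _ ->]].
    by have [i ->] := all_b0 P HP; exists i.
  have HBi : pblock pi (mk b0 i ord0) \in pi by apply: pblock_mem; exact: cover_pi Hp _.
  have [i' Ei'] := all_b0 _ HBi.
  have : mk b0 i ord0 \in pblock pi (mk b0 i ord0) by rewrite mem_pblock; exact: cover_pi Hp _.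
  rewrite Ei' inE => h.
  have ii : i = i' by move: h; case: b0 {Ei' E0 all_b0 HBi} => /= /eqP.
  by rewrite ii -Ei'.
by case: b0 {E0 all_b0} pieq => ->; [left; rewrite Lpart_eq | right; rewrite Rpart_eq].
Qed.
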